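(* Let $R$ be a skew invertible R-matrix on $V\otimes V$. Define $J_1=I$, $J_{k+1}=R_kJ_kR_k$ and $\Upsilon^{(1)}_R=1$, $\Upsilon^{(k+1)}_R=(R_1R_2\cdots R_k)\Upsilon^{(k)}_R$ for $k\ge1$. Then for every $i\ge1$, $$\mathrm{Tr}_{R(i+1,\dots,2i)}\,\Upsilon^{(2i)}_R=\bigl(\Upsilon^{(i)}_R\bigr)^4=\bigl(J_1J_2\cdots J_i\bigr)^2 .$$
   Context: $V$ is a finite-dimensional complex vector space, $I=\mathrm{id}_V$, $P$ the flip. For an operator $X$ on $V\otimes V$, $X_k$ acts in tensor factors $k,k+1$ of $V^{\otimes m}$ and $X_{kl}$ in factors $k,l$. An R-matrix is an invertible $R$ with $R_1R_2R_1=R_2R_1R_2$; it is skew invertible if there is $\Psi$ with $\mathrm{Tr}_{(2)}(R_{12}\Psi_{23})=\mathrm{Tr}_{(2)}(\Psi_{12}R_{23})=P_{13}$ ($\mathrm{Tr}_{(k)}$ = partial trace over factor $k$). Then $(D_R)_1:=\mathrm{Tr}_{(2)}\Psi_{12}$ and the R-trace over factor $k$ is $\mathrm{Tr}_{R(k)}(Y)=\mathrm{Tr}_{(k)}((D_R)_kY)$; $\mathrm{Tr}_{R(k,\dots,l)}$ is the composition over factors $k,\dots,l$. *)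

(* Defs.v *)
From HB Require Import structures.
From mathcomp Require Import all_boot all_order all_algebra.
From mathcomp Require Import reals complex.
Set Implicit Arguments. Unset Strict Implicit. Unset Printing Implicit Defensive.
Import Order.TTheory GRing.Theory Num.Theory.
Local Open Scope ring_scope.

(* V = C^n with C = R[i] (R a real type), so C is the field of complex
   numbers.  Basis vectors of V^{(x)m} are indexed by multi-indices
   idx n m = {ffun 'I_m -> 'I_n}; tensor factor number a+1 (1-based, as in
   the paper) is the coordinate a : 'I_m (0-based).  An operator on V^{(x)m}
   is given by its matrix kernel in the tensor-product basis. *)

Section Ops.
Variable R : realType.
Local Notation C := (R[i]).
Variable n : nat.

Definition idx (m : nat) := {ffun 'I_m -> 'I_n}.
Definition op (m : nat) := idx m -> idx m -> C.

Definition op1 m : op m := fun i j => (i == j)%:R.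
Definition op0 m : op m := fun _ _ => 0.
Definition opmul m (X Y : op m) : op m := fun i j => \sum_(k : idx m) X i k * Y k j.

Definition flip : op 2 := fun i j => ((i ord0 == j (@Ordinal 2 1 isT)) &&
                                       (i (@Ordinal 2 1 isT) == j ord0))%:R.

(* X_{ab} : X : op 2 acting in the factors a, b (a <> b) of V^{(x)m} *)
Definition pair_idx m (i : idx m) (a b : 'I_m) : idx 2 :=
  [ffun t : 'I_2 => if val t == 0%N then i a else i b].
Definition embed2 m (X : op 2) (a b : 'I_m) : op m := fun i j =>
  X (pair_idx i a b) (pair_idx j a b) *
  [forall c : 'I_m, (c != a) ==> (c != b) ==> (i c == j c)]%:R.
(* same with positions given as (0-based) naturals; 0 if out of range *)
Definition embedN m (X : op 2) (a b : nat) : op m :=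
  match (insub a : option 'I_m), (insub b : option 'I_m) with
  | Some a', Some b' => embed2 X a' b'
  | _, _ => fun _ _ => 0
  end.

Definition embed1 m (Y : op 1) (a : 'I_m) : op m := fun i j =>
  Y [ffun _ => i a] [ffun _ => j a] *
  [forall c : 'I_m, (c != a) ==> (i c == j c)]%:R.

Definition ins m (a : 'I_m.+1) (i : idx m) (l : 'I_n) : idx m.+1 :=
  [ffun c => if unlift a c is Some c' then i c' else l].

Definition ptr m (a : 'I_m.+1) (Y : op m.+1) : op m := fun i j =>
  \sum_(l : 'I_n) Y (ins a i l) (ins a j l).

End Ops.
Arguments op1 {R n m}.
Arguments op0 {R n m}.
Arguments flip {R n}.

Section RMatrix.
Local Unset Implicit Arguments.
Variable R : realType.
Variable n : nat.
Local Notation op := (op R n).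

Definition o01 : 'I_2 := @Ordinal 2 1 isT.   (* factor 2 of V(x)V *)
Definition o13 : 'I_3 := @Ordinal 3 1 isT.   (* factor 2 of V(x)V(x)V *)

Definition is_Rmatrix (Rm : op 2) : Prop :=
  (exists Rinv : op 2, opmul Rm Rinv = op1 /\ opmul Rinv Rm = op1) /\
  opmul (embedN Rm 0 1) (opmul (@embedN R n 3 Rm 1 2) (embedN Rm 0 1)) =
  opmul (embedN Rm 1 2) (opmul (@embedN R n 3 Rm 0 1) (embedN Rm 1 2)).

Definition skew_inverse (Rm Psi : op 2) : Prop :=
  ptr o13 (opmul (@embedN R n 3 Rm 0 1) (embedN Psi 1 2)) = flip /\
  ptr o13 (opmul (@embedN R n 3 Psi 0 1) (embedN Rm 1 2)) = flip.

Definition DR (Psi : op 2) : op 1 := ptr o01 Psi.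

Definition rtr_last (D : op 1) m (Y : op m.+1) : op m :=
  ptr ord_max (opmul (embed1 D ord_max) Y).

(* Tr_{R(m+1,...,m+k)} on V^{(x)(k+m)}: R-traces over the last k factors *)
Fixpoint rtrs (D : op 1) (m k : nat) : op (k + m) -> op m :=
  match k return op (k + m) -> op m with
  | 0 => fun Y => Y
  | k'.+1 => fun Y => rtrs D m k' (rtr_last D (k' + m) Y)
  end.

(* R_k (paper, k >= 1) acting in factors k, k+1 of V^{(x)m} *)
Definition Rk (Rm : op 2) m (k : nat) : op m := embedN Rm k.-1 k.

Fixpoint Jop (Rm : op 2) m (k : nat) : op m :=
  match k with
  | 0 => op1
  | 1 => op1
  | (k'.+1 as p).+1 => opmul (Rk Rm m p) (opmul (Jop Rm m p) (Rk Rm m p))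
  end.

Fixpoint Ups (Rm : op 2) m (k : nat) : op m :=
  match k with
  | 0 => op1
  | 1 => op1
  | (k'.+1 as p).+1 => opmul (\big[@opmul R n m / op1]_(1 <= j < p.+1) Rk Rm m j)
                   (Ups Rm m p)
  end.

Definition Jprod (Rm : op 2) m (k : nat) : op m :=
  \big[@opmul R n m / op1]_(1 <= j < k.+1) Jop Rm m j.

End RMatrix.
Arguments is_Rmatrix {R n}.
Arguments skew_inverse {R n}.
Arguments DR {R n}.
Arguments rtr_last {R n}.
Arguments rtrs {R n}.
Arguments Rk {R n}.
Arguments Jop {R n}.
Arguments Ups {R n}.
Arguments Jprod {R n}.

(* Main.v *)
Require Import Defs.
From HB Require Import structures.
From mathcomp Require Import all_boot all_order all_algebra zify.
From mathcomp Require Import reals complex.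
From Stdlib Require Import FunctionalExtensionality.
Set Implicit Arguments. Unset Strict Implicit. Unset Printing Implicit Defensive.

Inductive beq : seq nat -> seq nat -> Prop :=
| beq_refl w : beq w w
| beq_sym u v : beq u v -> beq v u
| beq_trans u v w : beq u v -> beq v w -> beq u w
| beq_cat a a' b b' : beq a a' -> beq b b' -> beq (a ++ b) (a' ++ b')
| beq_braid j : 0 < j -> beq [:: j; j.+1; j] [:: j.+1; j; j.+1]
| beq_comm a b : 0 < a -> a.+1 < b -> beq [:: a; b] [:: b; a].

Lemma beq_catl a b b' : beq b b' -> beq (a ++ b) (a ++ b').
Proof. by move=> H; apply: beq_cat => //; apply: beq_refl. Qed.
Lemma beq_catr a a' b : beq a a' -> beq (a ++ b) (a' ++ b).
Proof. by move=> H; apply: beq_cat => //; apply: beq_refl. Qed.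
Lemma beq_cons g b b' : beq b b' -> beq (g :: b) (g :: b').
Proof. exact: (@beq_catl [:: g]). Qed.

Lemma beq_comm2 a b : 0 < a -> 0 < b -> (a.+1 < b) || (b.+1 < a) ->
  beq [:: a; b] [:: b; a].
Proof.
move=> a0 b0 /orP[h|h]; first exact: beq_comm.
by apply: beq_sym; apply: beq_comm.
Qed.

Definition far j g := (0 < g) && ((g.+1 < j) || (j.+1 < g)).

Lemma comm_w j w : 0 < j -> all (far j) w -> beq (w ++ [:: j]) (j :: w).
Proof.
move=> j0; elim: w => [_|g w IH] /=; first exact: beq_refl.
case/andP=> /andP[g0 hg] /IH H.
apply: beq_trans (beq_cons g H) _.
apply: (@beq_catr [:: g; j] [:: j; g] w).
exact: beq_comm2.
Qed.

Lemma conj_w (u : seq nat) (f : nat -> nat) (P : pred nat) w :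
  (forall g, P g -> beq (u ++ [:: g]) (f g :: u)) -> all P w ->
  beq (u ++ w) (map f w ++ u).
Proof.
move=> H; elim: w => [_|g w IH] /=; first by rewrite cats0; exact: beq_refl.
case/andP=> /H Hg /IH Hw.
have -> : u ++ g :: w = (u ++ [:: g]) ++ w by rewrite -catA.
apply: beq_trans (beq_catr w Hg) _.
exact: (beq_cons (f g) Hw).
Qed.

Definition inr m g := (0 < g) && (g < m).

Lemma all_inrW a b w : a <= b -> all (inr a) w -> all (inr b) w.
Proof.
move=> ab; apply: sub_all => g /andP[g0 ga]; apply/andP; split => //.
exact: leq_trans ga ab.
Qed.

Definition aw m := iota 1 m.
Fixpoint cw m := match m with 0 => [::] | 1 => [::] | (m'.+1 as p).+1 => p :: cw p end.
Fixpoint ups m := match m with 0 => [::] | p.+1 => iota 1 p ++ ups p end.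
Fixpoint jw m := match m with 0 => [::] | 1 => [::] | (k.+1 as p).+1 => p :: jw p ++ [:: p] end.
Fixpoint jpw m := match m with 0 => [::] | p.+1 => jpw p ++ jw p.+1 end.
Definition cp m q := iter q (fun s => cw m ++ s) [::].
Definition Aw q m := iota (m.+1 - q) q.-1.

Lemma cwS m : 0 < m -> cw m.+1 = m :: cw m.
Proof. by case: m. Qed.

Lemma awS m : aw m.+1 = aw m ++ [:: m.+1].
Proof. by rewrite /aw -(addn1 m) iotaD add1n addn1. Qed.

Lemma all_iota_inr a k m : 0 < a -> a + k <= m -> all (inr m) (iota a k).
Proof.
move=> a0 h; apply/allP => g; rewrite mem_iota => /andP[ag gak].
apply/andP; split; lia.
Qed.

Lemma all_ups m : all (inr m) (ups m).
Proof.
elim: m => [|m IH] //=; rewrite all_cat; apply/andP; split.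
  by apply: all_iota_inr.
by apply: all_inrW IH.
Qed.

Lemma all_cw m : all (inr m) (cw m).
Proof.
elim: m => [|[|m] IH] //.
rewrite cwS //; apply/andP; split; first by rewrite /inr; lia.
by apply: all_inrW IH.
Qed.

Lemma all_cp m q : all (inr m) (cp m q).
Proof. by elim: q => [|q IH] //=; rewrite all_cat all_cw. Qed.

Lemma all_far_inr j m w : 0 < j -> all (inr m) w -> m <= j.-1 -> all (far j) w.
Proof.
move=> j0 H hm; apply: sub_all H => g /andP[g0 gm]; apply/andP; split => //.
apply/orP; left; rewrite -ltnS prednK // in hm.
by apply: leq_trans hm; rewrite ltnS.
Qed.

Lemma shiftA m j : 0 < j -> j < m -> beq (aw m ++ [:: j]) (j.+1 :: aw m).
Proof.
elim: m j => [|m IH] j j0 jm //.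
rewrite awS.
case: (ltngtP j m) => [jlt|jgt|jeq].
- rewrite -catA /=.
  apply: beq_trans (beq_catl _ (beq_sym (beq_comm j0 _))) _; first by lia.
  rewrite (_ : aw m ++ [:: j; m.+1] = (aw m ++ [:: j]) ++ [:: m.+1]); last by rewrite -catA.
  apply: beq_trans (beq_catr _ (IH j j0 jlt)) _.
  exact: beq_refl.
- lia.
- subst j; case: m IH jm j0 => [|p] IH jm j0 //.
  rewrite awS -!catA /=.
  apply: beq_trans (beq_catl (aw p) (beq_braid j0)) _.
  have -> : aw p ++ [:: p.+2; p.+1; p.+2] = (aw p ++ [:: p.+2]) ++ [:: p.+1; p.+2]
    by rewrite -catA.
  apply: beq_trans (beq_catr _ (comm_w _ _)) _ => //.
    apply: (@all_far_inr _ p.+1) => //; apply: all_iota_inr => //; lia.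
  exact: beq_refl.
Qed.

Lemma shiftC m j : 1 < j -> j < m -> beq (cw m ++ [:: j]) (j.-1 :: cw m).
Proof.
elim: m j => [|m IH] j j1 jm //.
have m0 : 0 < m by lia.
rewrite cwS //.
case: (ltngtP j m) => [jlt|jgt|jeq].
- apply: beq_trans (beq_cons _ (IH j j1 jlt)) _.
  apply: (@beq_catr [:: m; j.-1] [:: j.-1; m]).
  apply: beq_comm2; lia.
- lia.
- subst j; case: m IH jm j1 m0 => [|[|p]] IH jm j1 m0 //.
  rewrite cwS //=.
  apply: beq_trans (beq_cons _ (beq_cons _ (comm_w _ _))) _ => //.
    apply: (@all_far_inr _ p.+1) => //; exact: all_cw.
  apply: (@beq_catr [:: p.+2; p.+1; p.+2] [:: p.+1; p.+2; p.+1]).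
  exact: beq_sym (beq_braid _).
Qed.

Lemma upsS m : ups m.+1 = aw m ++ ups m.
Proof. by []. Qed.

Lemma W1 m : beq (ups m.+1) (ups m ++ cw m.+1).
Proof.
elim: m => [|m IH]; first exact: beq_refl.
rewrite (upsS m.+1).
apply: beq_trans (beq_catl _ IH) _.
rewrite (upsS m) awS (@cwS m.+1) // -!catA.
apply: beq_catl.
rewrite (_ : [:: m.+1] ++ ups m ++ cw m.+1 = ([:: m.+1] ++ ups m) ++ cw m.+1) ?catA //.
rewrite (_ : ups m ++ m.+1 :: cw m.+1 = (ups m ++ [:: m.+1]) ++ cw m.+1); last by rewrite -catA.
apply: beq_catr.
apply: beq_sym; apply: comm_w => //.
apply: (@all_far_inr _ m) => //; exact: all_ups.
Qed.

Lemma W2 m j : 0 < j -> j < m -> beq (ups m ++ [:: j]) ((m - j) :: ups m).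
Proof.
elim: m j => [|m IH] j j0 jm //.
case: (ltngtP j m) => [jlt|jgt|jeq].
- rewrite upsS -catA.
  apply: beq_trans (beq_catl _ (IH j j0 jlt)) _.
  rewrite (_ : aw m ++ m - j :: ups m = (aw m ++ [:: m - j]) ++ ups m); last by rewrite -catA.
  apply: beq_trans (beq_catr _ (shiftA _ _)) _; try lia.
  have -> : m.+1 - j = (m - j).+1 by lia.
  exact: beq_refl.
- lia.
- subst j; case: m IH jm j0 => [|[|p]] IH jm j0 //.
    exact: beq_refl.
  apply: beq_trans (beq_catr _ (W1 p.+2)) _.
  rewrite -catA.
  have H : beq (cw p.+3 ++ [:: p.+2]) (p.+1 :: cw p.+3) := @shiftC p.+3 p.+2 isT (ltnSn _).
  apply: beq_trans (beq_catl _ H) _.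
  have H2 : beq (ups p.+2 ++ [:: p.+1]) (1 :: ups p.+2).
    by have := IH p.+1 isT (ltnSn _); rewrite subSnn.
  rewrite (_ : ups p.+2 ++ p.+1 :: cw p.+3 = (ups p.+2 ++ [:: p.+1]) ++ cw p.+3); last by rewrite -catA.
  apply: beq_trans (beq_catr _ H2) _.
  rewrite subSnn cat_cons.
  apply: beq_cons; apply: beq_sym; exact: W1.
Qed.

Lemma reflect_w m w : all (inr m) w ->
  beq (ups m ++ w) (map (fun j => m - j) w ++ ups m).
Proof.
apply: conj_w => g /andP[g0 gm]; exact: W2.
Qed.

Lemma RV M q : q <= M -> map (fun j => M - j) (iota (M.+1 - q) q.-1) = cw q.
Proof.
elim: q => [|[|r] IH] qM //.
rewrite cwS // -IH; last lia.
have -> : M.+1 - r.+2 = M - r.+1 by lia.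
have E : M.+1 - r.+1 = (M - r.+1).+1 by lia.
rewrite E /=; congr (_ :: _); lia.
Qed.

Lemma cpS m q : cp m q.+1 = cw m ++ cp m q.
Proof. by []. Qed.

Lemma cp0 m : cp m 0 = [::]. Proof. by []. Qed.
Lemma cp1 m : cp m 1 = cw m. Proof. by rewrite cpS cp0 cats0. Qed.

Lemma map_pred_iota a k : iota a k = map predn (iota a.+1 k).
Proof. by elim: k a => [|k IH] a //=; rewrite -IH. Qed.

Lemma W3 m q : 0 < q -> q <= m -> beq (cp m.+1 q) (Aw q m ++ m :: cp m q).
Proof.
move=> q0; elim: q q0 => [|q IH] // _ qm.
have m0 : 0 < m by lia.
case: q IH qm => [|q] IH qm.
  by rewrite !cp1 /Aw cwS //; exact: beq_refl.
have Hq : q.+1 <= m by lia.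
rewrite cpS.
apply: beq_trans (beq_catl _ (IH isT Hq)) _.
case: m IH m0 qm {Hq} => [|[|p]] IH m0 qm //; try lia.
clear IH.
rewrite (@cwS p.+2) // catA.
set cp' := cp p.+2 q.+1.
have HI : all (inr p.+1) (iota (p.+1 - q) q) by apply: all_iota_inr; lia.
have HA : beq (cw p.+2 ++ Aw q.+1 p.+2) (iota (p.+1 - q) q ++ cw p.+2).
  have -> : iota (p.+1 - q) q = map predn (Aw q.+1 p.+2).
    rewrite /Aw /=.
    have -> : p.+3 - q.+1 = (p.+1 - q).+1 by lia.
    by rewrite map_pred_iota.
  apply: (@conj_w _ _ (fun g => (1 < g) && (g < p.+2))) => [g /andP[g1 gm]|]; first exact: shiftC.
  rewrite /Aw; apply/allP => g; rewrite mem_iota => /andP[h1 h2]; apply/andP; split; lia.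
set I := iota (p.+1 - q) q.
apply: (@beq_trans _ (p.+2 :: ((I ++ p.+1 :: cw p.+1) ++ p.+2 :: cp'))).
  apply: (@beq_trans _ (p.+2 :: ((cw p.+2 ++ Aw q.+1 p.+2) ++ p.+2 :: cp'))).
    exact: beq_refl.
  apply: beq_cons; apply: beq_catr.
  by rewrite -(@cwS p.+1).
apply: (@beq_trans _ ((I ++ [:: p.+2]) ++ p.+1 :: (cw p.+1 ++ [:: p.+2]) ++ cp')).
  rewrite (_ : p.+2 :: ((I ++ p.+1 :: cw p.+1) ++ p.+2 :: cp') =
     ([:: p.+2] ++ I) ++ p.+1 :: (cw p.+1 ++ [:: p.+2]) ++ cp'); last by rewrite /= -!catA.
  apply: beq_catr; apply: beq_sym; apply: comm_w => //.
  by apply: (@all_far_inr _ p.+1).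
apply: (@beq_trans _ ((I ++ [:: p.+2]) ++ p.+1 :: (p.+2 :: cw p.+1) ++ cp')).
  apply: beq_catl; apply: beq_cons; apply: beq_catr; apply: comm_w => //.
  apply: (@all_far_inr _ p.+1) => //; exact: all_cw.
apply: (@beq_trans _ (I ++ [:: p.+1; p.+2; p.+1] ++ cw p.+1 ++ cp')).
  rewrite -catA; apply: beq_catl.
  exact: (@beq_catr [:: p.+2; p.+1; p.+2] [:: p.+1; p.+2; p.+1] _ (beq_sym (beq_braid _))).
have -> : Aw q.+2 p.+2 = I ++ [:: p.+1].
  rewrite /Aw /I.
  have -> : p.+3 - q.+2 = p.+1 - q by lia.
  have := iotaD (p.+1 - q) q 1; rewrite addn1 => ->.
  have -> : p.+1 - q + q = p.+1 by lia.
  by [].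
rewrite cpS (@cwS p.+1) // -catA; exact: beq_refl.
Qed.

Lemma JW m : jw m.+1 = cw m.+1 ++ aw m.
Proof.
elim: m => [|m IH] //.
rewrite (_ : jw m.+2 = m.+1 :: jw m.+1 ++ [:: m.+1]) // IH awS (@cwS m.+1) //.
by rewrite /= catA.
Qed.

Lemma Jcomm m j : 0 < j -> j < m -> beq (jw m.+1 ++ [:: j]) (j :: jw m.+1).
Proof.
move=> j0 jm; rewrite JW -catA.
apply: beq_trans (beq_catl _ (shiftA j0 jm)) _.
rewrite (_ : cw m.+1 ++ j.+1 :: aw m = (cw m.+1 ++ [:: j.+1]) ++ aw m); last by rewrite -catA.
have H : beq (cw m.+1 ++ [:: j.+1]) (j :: cw m.+1) := @shiftC m.+1 j.+1 j0 jm.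
apply: beq_trans (beq_catr _ H) _; exact: beq_refl.
Qed.

Lemma Jcomm_w m w : all (inr m) w -> beq (jw m.+1 ++ w) (w ++ jw m.+1).
Proof.
move=> H; have := @conj_w (jw m.+1) id (inr m) w _ H.
  rewrite map_id; apply => g /andP[g0 gm]; exact: Jcomm.
Qed.

Lemma DD m : beq (ups m.+1 ++ ups m.+1) (ups m ++ ups m ++ jw m.+1).
Proof.
rewrite {2}upsS.
apply: beq_trans (beq_catr _ (W1 m)) _.
rewrite -!catA; apply: beq_catl.
rewrite catA -JW; apply: Jcomm_w; exact: all_ups.
Qed.

Lemma W5 m : beq (ups m ++ ups m) (jpw m).
Proof.
elim: m => [|m IH]; first exact: beq_refl.
apply: beq_trans (DD m) _.
rewrite catA; apply: beq_catr IH.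
Qed.

Lemma W4 m : beq (cp m m) (ups m ++ ups m).
Proof.
elim: m => [|[|p] IH]; try exact: beq_refl.
rewrite cpS.
apply: beq_trans (beq_catl _ (@W3 p.+1 p.+1 isT (leqnn _))) _.
apply: beq_trans (beq_catl _ (beq_catl _ (beq_cons _ IH))) _.
have -> : Aw p.+1 p.+1 = aw p by rewrite /Aw subSnn.
rewrite catA (_ : (cw p.+2 ++ aw p) ++ p.+1 :: (ups p.+1 ++ ups p.+1) =
   (cw p.+2 ++ aw p.+1) ++ (ups p.+1 ++ ups p.+1)); last by rewrite awS -!catA.
rewrite -JW.
apply: beq_trans (Jcomm_w _) _.
  by rewrite all_cat all_ups.
rewrite -catA; apply: beq_sym; exact: DD.
Qed.

Definition Sw N p := ups p ++ ups N ++ cp N p.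

Lemma StepA M p : 0 < M -> p.+1 <= M ->
  beq (Sw M.+1 p) ((ups p ++ ups M ++ Aw p.+1 M) ++ M :: cp M p.+1).
Proof.
move=> M0 pM; rewrite /Sw.
apply: beq_trans (beq_catl _ (beq_catr _ (W1 M))) _.
rewrite -catA -cpS.
apply: beq_trans (beq_catl _ (beq_catl _ (@W3 M p.+1 isT pM))) _.
rewrite -!catA; exact: beq_refl.
Qed.

Lemma all_Aw M p : p.+1 <= M -> all (inr M) (Aw p.+1 M).
Proof. by move=> pM; rewrite /Aw; apply: all_iota_inr; lia. Qed.

Lemma StepB M p : p.+1 <= M ->
  beq ((ups p ++ ups M ++ Aw p.+1 M) ++ cp M p.+1) (Sw M p.+1).
Proof.
move=> pM; rewrite /Sw.
rewrite (_ : (ups p ++ ups M ++ Aw p.+1 M) ++ cp M p.+1 =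
   ups p ++ ((ups M ++ Aw p.+1 M) ++ cp M p.+1)); last by rewrite -!catA.
apply: (@beq_trans _ (ups p ++ (cw p.+1 ++ ups M) ++ cp M p.+1)).
  apply: beq_catl; apply: beq_catr.
  by rewrite -(RV pM); apply: reflect_w; apply: all_Aw.
rewrite (_ : ups p ++ (cw p.+1 ++ ups M) ++ cp M p.+1 = (ups p ++ cw p.+1) ++ (ups M ++ cp M p.+1)); last by rewrite -!catA.
apply: beq_catr; apply: beq_sym; exact: W1.
Qed.

Import Order.TTheory GRing.Theory Num.Theory.
Local Open Scope ring_scope.

Section Ops1.
Variable R : realType.
Variable n : nat.
Local Notation C := (R[i]).
Local Notation op := (op R n).
Local Notation idx := (idx n).

Lemma opext m (X Y : op m) : (forall i j, X i j = Y i j) -> X = Y.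
Proof.
move=> H; apply: functional_extensionality => i.
apply: functional_extensionality => j; exact: H.
Qed.

Lemma opmulA m (X Y Z : op m) : opmul X (opmul Y Z) = opmul (opmul X Y) Z.
Proof.
apply: opext => i j; rewrite /opmul.
under eq_bigr => k _ do rewrite big_distrr /=.
rewrite exchange_big /=; apply: eq_bigr => l _.
rewrite big_distrl /=; apply: eq_bigr => k _; by rewrite mulrA.
Qed.

Lemma op1mul m (X : op m) : opmul op1 X = X.
Proof.
apply: opext => i j; rewrite /opmul /op1 (bigD1 i) //= eqxx mul1r.
rewrite big1 ?addr0 // => k /negbTE; rewrite eq_sym => ->; by rewrite mul0r.
Qed.

Lemma opmul1 m (X : op m) : opmul X op1 = X.
Proof.
apply: opext => i j; rewrite /opmul /op1 (bigD1 j) //= eqxx mulr1.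
rewrite big1 ?addr0 // => k /negbTE ->; by rewrite mulr0.
Qed.

Lemma op0mul m (X : op m) : opmul (fun _ _ => 0) X = (fun _ _ => 0).
Proof. apply: opext => i j; rewrite /opmul big1 // => k _; by rewrite mul0r. Qed.

Lemma opmul0 m (X : op m) : opmul X (fun _ _ => 0) = (fun _ _ => 0).
Proof. apply: opext => i j; rewrite /opmul big1 // => k _; by rewrite mulr0. Qed.

Lemma natb_mul (a b : bool) : (a && b)%:R = a%:R * b%:R :> C.
Proof. by case: a; case: b; rewrite ?mulr1 ?mulr0 ?mul0r. Qed.

Lemma natb_if (b : bool) (x : C) : b%:R * x = if b then x else 0.
Proof. by case: b; rewrite ?mul1r ?mul0r. Qed.

Section Embed.
Variables (N k : nat) (f : 'I_k -> 'I_N).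
Hypothesis finj : injective f.

Definition restr (i : idx N) : idx k := [ffun t => i (f t)].
Definition outside (c : 'I_N) := [forall t, f t != c].
Definition agree (i j : idx N) := [forall c, outside c ==> (i c == j c)].
Definition embedF (X : op k) : op N := fun i j =>
  X (restr i) (restr j) * (agree i j)%:R.
Definition mergeF (i : idx N) (l : idx k) : idx N :=
  [ffun c => if [pick t | f t == c] is Some t then l t else i c].

Lemma merge_in i l t : mergeF i l (f t) = l t.
Proof.
rewrite ffunE; case: pickP => [t' /eqP /finj -> //|H].
by have := H t; rewrite eqxx.
Qed.

Lemma merge_out i l c : outside c -> mergeF i l c = i c.
Proof.
move=> /forallP H; rewrite ffunE; case: pickP => [t' /eqP Ht|//].
by have := H t'; rewrite Ht eqxx.
Qed.

Lemma outsideP c : outside c \/ exists t, c = f t.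
Proof.
case E: (outside c); first by left.
right; move/negbT: E => /forallPn [t]; rewrite negbK => /eqP <-; by exists t.
Qed.

Lemma restr_merge i l : restr (mergeF i l) = l.
Proof. by apply/ffunP => t; rewrite ffunE merge_in. Qed.

Lemma agree_merge i l j : agree (mergeF i l) j = agree i j.
Proof.
apply: eq_forallb => c; case E: (outside c) => //=.
by rewrite merge_out.
Qed.

Lemma agree_sym i j : agree i j = agree j i.
Proof. by apply: eq_forallb => c; rewrite eq_sym. Qed.

Lemma agree_refl i : agree i i.
Proof. by apply/forallP => c; rewrite eqxx implybT. Qed.

Lemma key i k0 l : (agree i k0 && (restr k0 == l)) = (k0 == mergeF i l).
Proof.
apply/andP/eqP => [[/forallP Ha /eqP Hr]|->]; last first.
  by rewrite agree_sym agree_merge agree_refl restr_merge.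
apply/ffunP => c; case: (outsideP c) => [Hc|[t ->]].
  by rewrite merge_out //; have := Ha c; rewrite Hc /= => /eqP.
by rewrite merge_in -Hr ffunE.
Qed.

Lemma sumS (i : idx N) (G : idx N -> C) :
  \sum_(k0 : idx N) (agree i k0)%:R * G k0 = \sum_(l : idx k) G (mergeF i l).
Proof.
under eq_bigr => k0 _ do rewrite natb_if.
rewrite -big_mkcond (partition_big restr xpredT) //=.
apply: eq_bigr => l _; apply: big_pred1 => k0; exact: key.
Qed.

Lemma embedF_mul (X Y : op k) :
  embedF (opmul X Y) = opmul (embedF X) (embedF Y).
Proof.
apply: opext => i j; rewrite /embedF /opmul.
transitivity (\sum_(k0 : idx N) (agree i k0)%:R *
   (X (restr i) (restr k0) * (Y (restr k0) (restr j) * (agree k0 j)%:R))).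
  rewrite sumS big_distrl /=; apply: eq_bigr => l _.
  by rewrite agree_merge restr_merge mulrA.
apply: eq_bigr => k0 _; rewrite !mulrA; congr (_ * _).
by rewrite [_ * X _ _]mulrC.
Qed.

Lemma restr_agree i j : (restr i == restr j) && agree i j = (i == j).
Proof.
apply/andP/eqP => [[/eqP Hr /forallP Ha]|->]; last by rewrite eqxx agree_refl.
apply/ffunP => c; case: (outsideP c) => [Hc|[t ->]].
  by have := Ha c; rewrite Hc /= => /eqP.
by have := congr1 (fun g : idx k => g t) Hr; rewrite !ffunE.
Qed.

Lemma embedF_1 : embedF op1 = op1.
Proof.
by apply: opext => i j; rewrite /embedF /op1 -natb_mul restr_agree.
Qed.

End Embed.

Lemma embedF_comp N k k2 (f : 'I_k -> 'I_N) (g : 'I_k2 -> 'I_k)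
  (h : 'I_k2 -> 'I_N) (X : op k2) :
  injective f -> (forall t, h t = f (g t)) ->
  embedF f (embedF g X) = embedF h X.
Proof.
move=> finj Hh; apply: opext => i j; rewrite /embedF -mulrA -natb_mul.
have Er : forall i0, restr g (restr f i0) = restr h i0.
  by move=> i0; apply/ffunP => t; rewrite !ffunE Hh.
rewrite !Er.
suff -> : agree g (restr f i) (restr f j) && agree f i j = agree h i j by [].
apply/andP/idP => [[/forallP Hg /forallP Hf]|/forallP H].
  apply/forallP => c; apply/implyP => Hc; case: (outsideP f c) => [Hfc|[s Es]].
    by have := Hf c; rewrite Hfc.
  have Hs : outside g s.
    apply/forallP => t; apply/negP => /eqP Ets.
    by move/forallP: Hc => /(_ t); rewrite Hh Ets Es eqxx.
  by have := Hg s; rewrite Hs /= !ffunE Es.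
split; apply/forallP => c; apply/implyP => Hc.
  rewrite !ffunE; apply: (implyP (H (f c))); apply/forallP => t.
  rewrite Hh; apply/negP => /eqP /finj Et.
  by move/forallP: Hc => /(_ t); rewrite Et eqxx.
apply: (implyP (H c)); apply/forallP => t; rewrite Hh.
by move/forallP: Hc => /(_ (g t)).
Qed.


Section Disj.
Variables (N k k2 : nat) (f : 'I_k -> 'I_N) (g : 'I_k2 -> 'I_N).
Hypotheses (finj : injective f) (ginj : injective g).
Hypothesis disj : forall t s, f t != g s.

Definition agree2 (i j : idx N) :=
  [forall c, outside f c ==> outside g c ==> (i c == j c)].

Lemma agree_mergeFG i l j :
  agree g (mergeF f i l) j = (l == restr f j) && agree2 i j.
Proof.
apply/idP/andP => [/forallP H|[/eqP Hl /forallP H2]].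
  split.
    apply/eqP/ffunP => t; rewrite ffunE -(merge_in finj i l t); apply/eqP.
    apply: (implyP (H (f t))); apply/forallP => s; rewrite eq_sym; exact: disj.
  apply/forallP => c; apply/implyP => Hf; apply/implyP => Hg.
  by have := implyP (H c) Hg; rewrite merge_out.
apply/forallP => c; apply/implyP => Hc.
case: (outsideP f c) => [Hf|[t ->]].
  by rewrite merge_out //; exact: (implyP (implyP (H2 c) Hf) Hc).
by rewrite merge_in // Hl ffunE.
Qed.

Lemma restr_mergeFG i l : restr g (mergeF f i l) = restr g i.
Proof.
apply/ffunP => t; rewrite ffunE [RHS]ffunE merge_out //.
apply/forallP => s; exact: disj.
Qed.

Lemma mulFG (X : op k) (Y : op k2) i j :
  opmul (embedF f X) (embedF g Y) i j =
  X (restr f i) (restr f j) * Y (restr g i) (restr g j) * (agree2 i j)%:R.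
Proof.
rewrite /opmul /embedF.
transitivity (\sum_(k0 : idx N) (agree f i k0)%:R *
   (X (restr f i) (restr f k0) * (Y (restr g k0) (restr g j) * (agree g k0 j)%:R))).
  apply: eq_bigr => k0 _; rewrite !mulrA; by rewrite [_%:R * X _ _]mulrC.
rewrite sumS //.
under eq_bigr => l _ do rewrite restr_merge // restr_mergeFG agree_mergeFG natb_mul.
rewrite (bigD1 (restr f j)) //= eqxx mul1r big1 ?addr0.
  by rewrite !mulrA.
by move=> l /negbTE ->; rewrite mul0r !mulr0.
Qed.
End Disj.

Lemma embedF_comm N k k2 (f : 'I_k -> 'I_N) (g : 'I_k2 -> 'I_N) (X : op k) (Y : op k2) :
  injective f -> injective g -> (forall t s, f t != g s) ->
  opmul (embedF f X) (embedF g Y) = opmul (embedF g Y) (embedF f X).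
Proof.
move=> fi gi d; apply: opext => i j.
have d' : forall t s, g t != f s by move=> t s; rewrite eq_sym.
rewrite (mulFG fi d) (mulFG gi d').
rewrite [X _ _ * _]mulrC.
suff -> : agree2 f g i j = agree2 g f i j by [].
apply: eq_forallb => c.
by case: (outside f c); case: (outside g c).
Qed.

Definition fab m (a b : 'I_m) : 'I_2 -> 'I_m := fun t => if val t == 0%N then a else b.

Lemma fab_inj m (a b : 'I_m) : a != b -> injective (fab a b).
Proof.
move=> ab [[|[|t]] Ht] [[|[|s]] Hs] //= E; try (by apply: val_inj);
  rewrite /fab /= in E; by rewrite E eqxx in ab.
Qed.

Lemma outside_fab m (a b : 'I_m) c : outside (fab a b) c = (a != c) && (b != c).
Proof.
apply/forallP/andP => [H|[Ha Hb] t].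
  by split; [exact: (H ord0) | exact: (H (@Ordinal 2 1 isT))].
by rewrite /fab; case: (val t == 0%N).
Qed.

Lemma embed2_F m (X : op 2) (a b : 'I_m) : embed2 X a b = embedF (fab a b) X.
Proof.
apply: opext => i j; rewrite /embed2 /embedF.
have Hp : forall i0 : idx m, pair_idx i0 a b = restr (fab a b) i0.
  by move=> i0; apply/ffunP => t; rewrite !ffunE /fab; case: (val t == 0%N).
rewrite !Hp; congr (_ * (nat_of_bool _)%:R); apply: eq_forallb => c.
rewrite outside_fab ![c == _]eq_sym.
by case: (a != c); case: (b != c).
Qed.

Lemma embed1_F m (Y : op 1) (a : 'I_m) : embed1 Y a = embedF (fun _ : 'I_1 => a) Y.
Proof.
apply: opext => i j; rewrite /embed1 /embedF; congr (_ * (nat_of_bool _)%:R).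
apply: eq_forallb => c.
have -> : outside (fun _ : 'I_1 => a) c = (a != c).
  by apply/forallP/idP => [H|H t]; [exact: H ord0 | exact: H].
by rewrite eq_sym.
Qed.

Section RkS.
Variable Rm : op 2.

Lemma Rk_0 N j : (N <= j)%N -> Rk Rm N j = (fun _ _ => 0).
Proof.
move=> H; rewrite /Rk /embedN; case: (insub j.-1) => [a|] //.
case: insubP => [b _ Eb|] //.
by have := ltn_ord b; rewrite Eb ltnNge H.
Qed.

Lemma Rk_F N j (a b : 'I_N) : (0 < j)%N -> val a = j.-1 -> val b = j ->
  Rk Rm N j = embedF (fab a b) Rm.
Proof.
move=> j0 Ha Hb; rewrite /Rk /embedN -embed2_F.
case: insubP => [a' _ Ea|]; last by rewrite -Ha ltn_ord.
case: insubP => [b' _ Eb|]; last by rewrite -Hb ltn_ord.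
by congr embed2; apply: val_inj; rewrite ?Ea ?Eb.
Qed.

End RkS.

End Ops1.


Section Ops2.
Variable R : realType.
Variable n : nat.
Local Notation C := (R[i]).
Local Notation op := (op R n).
Local Notation idx := (idx n).
Variable Rm : op 2.

Definition o3 (t : nat) (H : (t < 3)%N) : 'I_3 := Ordinal H.

Lemma Rk3_1 : Rk Rm 3 1 = embedF (fab (@o3 0 isT) (@o3 1 isT)) Rm.
Proof. exact: Rk_F. Qed.
Lemma Rk3_2 : Rk Rm 3 2 = embedF (fab (@o3 1 isT) (@o3 2 isT)) Rm.
Proof. exact: Rk_F. Qed.

Lemma lift3 N j (g3 : 'I_3 -> 'I_N) : injective g3 -> (0 < j)%N ->
  (forall t, val (g3 t) = j.-1 + t)%N ->
  Rk Rm N j = embedF g3 (Rk Rm 3 1) /\ Rk Rm N j.+1 = embedF g3 (Rk Rm 3 2).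
Proof.
move=> gi j0 Hg; split.
  rewrite (@Rk_F _ _ Rm _ _ (g3 (@o3 0 isT)) (g3 (@o3 1 isT))) //; last first.
  - by rewrite Hg /=; lia.
  - by rewrite Hg /=; lia.
  rewrite Rk3_1; symmetry; apply: embedF_comp => // t.
  by rewrite /fab; case: (val t == 0%N).
rewrite (@Rk_F _ _ Rm _ _ (g3 (@o3 1 isT)) (g3 (@o3 2 isT))) //; last first.
- by rewrite Hg /=; lia.
- by rewrite Hg /=; lia.
rewrite Rk3_2; symmetry; apply: embedF_comp => // t.
by rewrite /fab; case: (val t == 0%N).
Qed.

Hypothesis braid3 :
  opmul (@embedN R n 3 Rm 0 1) (opmul (@embedN R n 3 Rm 1 2) (@embedN R n 3 Rm 0 1)) =
  opmul (@embedN R n 3 Rm 1 2) (opmul (@embedN R n 3 Rm 0 1) (@embedN R n 3 Rm 1 2)).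

Lemma O2 N j : (0 < j)%N ->
  opmul (Rk Rm N j) (opmul (Rk Rm N j.+1) (Rk Rm N j)) =
  opmul (Rk Rm N j.+1) (opmul (Rk Rm N j) (Rk Rm N j.+1)).
Proof.
move=> j0; case: (ltnP j.+1 N) => HN; last first.
  by rewrite (Rk_0 _ HN) !op0mul opmul0.
case: N HN => [|N] HN //.
pose g3 (t : 'I_3) : 'I_N.+1 := inord (j.-1 + t).
have Hg : forall t, val (g3 t) = (j.-1 + t)%N.
  by move=> t; rewrite /g3 /= inordK //; have := ltn_ord t; lia.
have gi : injective g3.
  move=> t s E; apply: val_inj => /=; have := congr1 val E; rewrite !Hg; lia.
have [-> ->] := lift3 gi j0 Hg.
rewrite -!embedF_mul //.
by congr embedF; exact: braid3.
Qed.

Lemma O3 N a b : (0 < a)%N -> (a.+1 < b)%N ->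
  opmul (Rk Rm N a) (Rk Rm N b) = opmul (Rk Rm N b) (Rk Rm N a).
Proof.
move=> a0 ab; case: (ltnP b N) => HN; last first.
  by rewrite (Rk_0 _ HN) op0mul opmul0.
case: N HN => [|N] HN //.
have Ha1 : val (inord a.-1 : 'I_N.+1) = a.-1 by rewrite /= inordK //; lia.
have Ha : val (inord a : 'I_N.+1) = a by rewrite /= inordK //; lia.
have Hb1 : val (inord b.-1 : 'I_N.+1) = b.-1 by rewrite /= inordK //; lia.
have Hb : val (inord b : 'I_N.+1) = b by rewrite /= inordK //; lia.
rewrite (Rk_F Rm _ Ha1 Ha) // (Rk_F Rm _ Hb1 Hb); last lia.
apply: embedF_comm.
- by apply: fab_inj; rewrite -(inj_eq val_inj) Ha1 Ha; lia.
- by apply: fab_inj; rewrite -(inj_eq val_inj) Hb1 Hb; lia.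
- move=> t s; rewrite -(inj_eq val_inj) /fab.
  case: (val t == 0%N); case: (val s == 0%N); rewrite ?Ha1 ?Ha ?Hb1 ?Hb; lia.
Qed.

Definition evw N (w : seq nat) : op N :=
  foldr (fun j acc => opmul (Rk Rm N j) acc) op1 w.
Arguments evw N w : clear implicits.

Lemma eval_cat N a b : evw N (a ++ b) = opmul (evw N a) (evw N b).
Proof.
elim: a => [|x a IH] /=; first by rewrite op1mul.
by rewrite IH opmulA.
Qed.

Lemma eval_beq N u v : beq u v -> evw N u = evw N v.
Proof.
elim=> {u v} [w|u v _ ->|u v w _ -> _ ->|a a' b b' _ Ha _ Hb|j j0|a b a0 ab] //.
- by rewrite !eval_cat Ha Hb.
- by rewrite /= !opmul1; exact: O2.
- by rewrite /= !opmul1; exact: O3.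
Qed.

Definition wid m (t : 'I_m) : 'I_m.+1 := widen_ord (leqnSn m) t.
Lemma wid_inj m : injective (@wid m).
Proof. by move=> x y E; apply: val_inj; exact: (congr1 val E). Qed.
Definition liftop m (X : op m) : op m.+1 := embedF (@wid m) X.

Lemma liftop_mul m (X Y : op m) : liftop (opmul X Y) = opmul (liftop X) (liftop Y).
Proof. exact: embedF_mul (@wid_inj m) X Y. Qed.
Lemma liftop_1 m : liftop (@op1 R n m) = op1.
Proof. exact: embedF_1. Qed.

Lemma Rk_lift m j : (0 < j)%N -> (j < m)%N -> Rk Rm m.+1 j = liftop (Rk Rm m j).
Proof.
move=> j0 jm; case: m jm => [|m] jm //.
have Ha : val (inord j.-1 : 'I_m.+1) = j.-1 by rewrite /= inordK //; lia.
have Hb : val (inord j : 'I_m.+1) = j by rewrite /= inordK //; lia.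
rewrite (Rk_F Rm _ Ha Hb) //.
rewrite /liftop (@embedF_comp _ _ _ _ _ _ _ (fab (wid (inord j.-1)) (wid (inord j))) _ (@wid_inj _)).
  by apply: Rk_F.
by move=> t; rewrite /fab; case: (val t == 0%N).
Qed.

Lemma eval_lift m w : all (inr m) w -> evw m.+1 w = liftop (evw m w).
Proof.
elim: w => [|x w IH] /=; first by rewrite liftop_1.
case/andP=> /andP[x0 xm] /IH ->.
by rewrite Rk_lift // liftop_mul.
Qed.

End Ops2.


Section Ops3.
Variable R : realType.
Variable n : nat.
Local Notation C := (R[i]).
Local Notation op := (op R n).
Local Notation idx := (idx n).

Lemma wid_lift m (c : 'I_m) : lift ord_max c = wid c.
Proof. by apply: val_inj => /=; rewrite /bump leqNgt ltn_ord. Qed.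

Lemma ordP m (c : 'I_m.+1) : c = ord_max \/ exists c', c = wid c'.
Proof.
case: (unliftP ord_max c) => [c' ->|->]; last by left.
by right; exists c'; rewrite wid_lift.
Qed.

Lemma wid_neq m (c : 'I_m) : wid c != ord_max.
Proof. by rewrite -(inj_eq val_inj) /= neq_ltn ltn_ord. Qed.

Lemma insW m (i : idx m) l t : ins ord_max i l (wid t) = i t.
Proof.
rewrite ffunE -wid_lift liftK //.
Qed.

Lemma insM m (i : idx m) l : ins ord_max i l ord_max = l.
Proof. by rewrite ffunE unlift_none. Qed.

Lemma outside_wid m c : outside (@wid m) c = (c == ord_max).
Proof.
apply/forallP/eqP => [H|-> t]; last by rewrite wid_neq.
case: (ordP c) => [//|[c' Ec]].
by have := H c'; rewrite Ec eqxx.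
Qed.

Lemma restr_ins m (i : idx m) l : restr (@wid m) (ins ord_max i l) = i.
Proof. by apply/ffunP => t; rewrite ffunE insW. Qed.

Lemma merge_wid m (i : idx m) l l' :
  mergeF (@wid m) (ins ord_max i l) l' = ins ord_max l' l.
Proof.
apply/ffunP => c; case: (ordP c) => [->|[c' ->]].
  by rewrite merge_out ?outside_wid // !insM.
by rewrite merge_in ?insW //; exact: wid_inj.
Qed.

Lemma ptr_liftl m (X : op m) (Z : op m.+1) :
  ptr ord_max (opmul (liftop X) Z) = opmul X (ptr ord_max Z).
Proof.
apply: opext => i j; rewrite /ptr /opmul /liftop /embedF.
transitivity (\sum_(l : 'I_n) \sum_(l' : idx m) X i l' * Z (ins ord_max l' l) (ins ord_max j l)).
  apply: eq_bigr => l _.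
  transitivity (\sum_(k0 : idx m.+1) (agree (@wid m) (ins ord_max i l) k0)%:R *
     (X i (restr (@wid m) k0) * Z k0 (ins ord_max j l))).
    by apply: eq_bigr => k0 _; rewrite restr_ins mulrA [_ * _%:R]mulrC.
  rewrite sumS; last exact: wid_inj.
  by apply: eq_bigr => l' _; rewrite restr_merge ?merge_wid //; exact: wid_inj.
rewrite exchange_big /=; apply: eq_bigr => l' _; by rewrite big_distrr.
Qed.

Lemma ptr_liftr m (X : op m) (Z : op m.+1) :
  ptr ord_max (opmul Z (liftop X)) = opmul (ptr ord_max Z) X.
Proof.
apply: opext => i j; rewrite /ptr /opmul /liftop /embedF.
transitivity (\sum_(l : 'I_n) \sum_(l' : idx m) Z (ins ord_max i l) (ins ord_max l' l) * X l' j).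
  apply: eq_bigr => l _.
  transitivity (\sum_(k0 : idx m.+1) (agree (@wid m) (ins ord_max j l) k0)%:R *
     (Z (ins ord_max i l) k0 * X (restr (@wid m) k0) j)).
    by apply: eq_bigr => k0 _; rewrite restr_ins agree_sym mulrA [_ * _%:R]mulrC mulrA.
  rewrite sumS; last exact: wid_inj.
  by apply: eq_bigr => l' _; rewrite restr_merge ?merge_wid //; exact: wid_inj.
rewrite exchange_big /=; apply: eq_bigr => l' _; by rewrite big_distrl.
Qed.

Definition f1 m (t : 'I_1) : 'I_m.+1 := ord_max.
Lemma f1_inj m : injective (@f1 m).
Proof. by move=> t s _; rewrite (ord1 t) (ord1 s). Qed.

Lemma embed1_lift_comm m (D : op 1) (X : op m) :
  opmul (embed1 D ord_max) (liftop X) = opmul (liftop X) (embed1 D ord_max).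
Proof.
rewrite embed1_F -/(@f1 m) /liftop.
apply: embedF_comm; [exact: f1_inj | exact: wid_inj|].
by move=> t s; rewrite eq_sym wid_neq.
Qed.


Definition pr (x y : 'I_n) : idx 2 := [ffun t : 'I_2 => if val t == 0%N then x else y].

Section G4.
Variable m : nat.
Variables (D : op 1) (Rm : op 2).
Hypothesis H2 : forall x y : 'I_n,
  \sum_(l : 'I_n) \sum_(l' : idx 1) D [ffun=> l] l' * Rm (pr x (l' ord0)) (pr y l) = (x == y)%:R.

Let p' : 'I_m.+1 := ord_max.
Definition ag (i j : idx m.+1) := [forall c, (c != p') ==> (i c == j c)].

Lemma ag_ins (i j : idx m.+1) a0 l :
  agree (fab (wid p') ord_max) (ins ord_max i a0) (ins ord_max j l) = ag i j.
Proof.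
apply/forallP/forallP => [H c|H c].
  apply/implyP => Hc; have := H (wid c); rewrite outside_fab !insW.
  rewrite (inj_eq (@wid_inj _)) eq_sym Hc eq_sym wid_neq; exact.
apply/implyP; rewrite outside_fab => /andP[h1 h2].
case: (ordP c) h1 h2 => [->|[c' ->]]; first by rewrite eqxx.
rewrite !insW (inj_eq (@wid_inj _)) eq_sym => h1 _.
exact: (implyP (H c') h1).
Qed.

Lemma ag_eq (i j : idx m.+1) : (i p' == j p') && ag i j = (i == j).
Proof.
apply/andP/eqP => [[/eqP E /forallP H]|->]; last first.
  by split => //; apply/forallP => c; rewrite eqxx implybT.
apply/ffunP => c; case E2: (c == p'); first by move/eqP: E2 => ->.
by have := H c; rewrite E2 /= => /eqP.
Qed.

Lemma restr_fab_ins (i : idx m.+1) a0 :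
  restr (fab (wid p') ord_max) (ins ord_max i a0) = pr (i p') a0.
Proof.
apply/ffunP => t; rewrite ffunE [RHS]ffunE /fab.
case: (val t == 0%N); [exact: insW | exact: insM].
Qed.

Lemma merge_f1 (i : idx m.+1) l (l' : idx 1) :
  mergeF (@f1 m.+1) (ins ord_max i l) l' = ins ord_max i (l' ord0).
Proof.
apply/ffunP => c; case: (ordP c) => [->|[c' ->]].
  rewrite insM; exact: (merge_in (@f1_inj m.+1) (ins ord_max i l) l' ord0).
rewrite merge_out ?insW //.
by apply/forallP => t; rewrite /f1 eq_sym wid_neq.
Qed.

Lemma G4 : ptr ord_max (opmul (embed1 D ord_max) (Rk Rm m.+2 m.+1)) = op1.
Proof.
rewrite embed1_F -/(@f1 m.+1).
rewrite (@Rk_F _ _ Rm _ _ (wid p') ord_max) //.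
apply: opext => i j; rewrite /ptr /opmul /embedF.
transitivity (\sum_(l : 'I_n) \sum_(l' : idx 1) D [ffun=> l] l' *
   (Rm (pr (i p') (l' ord0)) (pr (j p') l) * (ag i j)%:R)).
  apply: eq_bigr => l _.
  have Hr : restr (@f1 m.+1) (ins ord_max i l) = [ffun=> l].
    by apply/ffunP => t; rewrite ffunE [RHS]ffunE insM.
  transitivity (\sum_(k0 : idx m.+2) (agree (@f1 m.+1) (ins ord_max i l) k0)%:R *
     (D [ffun=> l] (restr (@f1 m.+1) k0) *
      (Rm (restr (fab (wid p') ord_max) k0) (restr (fab (wid p') ord_max) (ins ord_max j l)) *
       (agree (fab (wid p') ord_max) k0 (ins ord_max j l))%:R))).
    apply: eq_bigr => k0 _; rewrite Hr !mulrA; congr (_ * _ * _).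
    by rewrite mulrC.
  rewrite sumS; last exact: f1_inj.
  apply: eq_bigr => l' _.
  by rewrite restr_merge ?merge_f1 ?restr_fab_ins ?ag_ins //; exact: f1_inj.
under eq_bigr => l _ do under eq_bigr => l' _ do rewrite mulrA.
under eq_bigr => l _ do rewrite -big_distrl /=.
by rewrite -big_distrl /= H2 /op1 -natb_mul ag_eq.
Qed.

End G4.

Lemma rtr_step m (D : op 1) (Rm : op 2) (X Y : op m.+1) :
  (forall x y : 'I_n,
    \sum_(l : 'I_n) \sum_(l' : idx 1) D [ffun=> l] l' * Rm (pr x (l' ord0)) (pr y l) = (x == y)%:R) ->
  rtr_last D m.+1 (opmul (liftop X) (opmul (Rk Rm m.+2 m.+1) (liftop Y))) = opmul X Y.
Proof.
move=> H2; rewrite /rtr_last opmulA embed1_lift_comm -opmulA ptr_liftl opmulA ptr_liftr.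
by rewrite G4 // op1mul.
Qed.

End Ops3.


Section Ops4.
Variable R : realType.
Variable n : nat.
Local Notation C := (R[i]).
Local Notation op := (op R n).
Local Notation idx := (idx n).

Definition tr (a b c : 'I_n) : idx 3 :=
  [ffun t : 'I_3 => if val t == 0%N then a else if val t == 1%N then b else c].

Lemma ins13 (x s b : 'I_n) : ins o13 (pr x s) b = tr x b s.
Proof.
apply/ffunP => c; rewrite !ffunE.
case: unliftP => [j ->|->] /=; last by [].
by case: j => -[|[|j]] Hj //=; rewrite ffunE.
Qed.

Lemma ins01 (u : idx 1) t : ins o01 u t = pr (u ord0) t.
Proof.
apply/ffunP => c; rewrite !ffunE.
case: unliftP => [j ->|->] /=; last by [].
by rewrite (ord1 j) /=; congr (u _); apply: val_inj.
Qed.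


Definition fab01 := fab (@o3 0 isT) (@o3 1 isT).
Definition fab12 := fab (@o3 1 isT) (@o3 2 isT).
Lemma fab01_inj : injective fab01. Proof. exact: fab_inj. Qed.

Lemma restr01_tr a b c : restr fab01 (tr a b c) = pr a b.
Proof. by apply/ffunP => t; rewrite !ffunE /fab; case: t => -[|[|t]] Ht. Qed.
Lemma restr12_tr a b c : restr fab12 (tr a b c) = pr b c.
Proof. by apply/ffunP => t; rewrite !ffunE /fab; case: t => -[|[|t]] Ht. Qed.

Lemma merge01_tr a b c (l : idx 2) :
  mergeF fab01 (tr a b c) l = tr (l ord0) (l (@Ordinal 2 1 isT)) c.
Proof.
apply/ffunP => -[[|[|[|t]]] Ht] //.
- have -> : Ordinal Ht = fab01 ord0 by apply: val_inj.
  by rewrite merge_in ?ffunE //; exact: fab01_inj.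
- have -> : Ordinal Ht = fab01 (@Ordinal 2 1 isT) by apply: val_inj.
  by rewrite merge_in ?ffunE //; exact: fab01_inj.
- rewrite merge_out ?ffunE //.
  by rewrite outside_fab.
Qed.

Lemma agree12_tr a b c a' b' c' : agree fab12 (tr a b c) (tr a' b' c') = (a == a').
Proof.
apply/forallP/idP => [H|H t].
  by have := H (@o3 0 isT); rewrite outside_fab !ffunE.
rewrite outside_fab; case: t => -[|[|[|t]]] Ht //=; rewrite !ffunE //.
Qed.

Lemma sum_idx2 (F : idx 2 -> C) :
  \sum_(l : idx 2) F l = \sum_(a : 'I_n) \sum_(c : 'I_n) F (pr a c).
Proof.
rewrite pair_big /= (reindex (fun p : 'I_n * 'I_n => pr p.1 p.2)) //.
exists (fun l : idx 2 => (l ord0, l (@Ordinal 2 1 isT))) => [[a c] _|l _].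
  by rewrite !ffunE.
by apply/ffunP => -[[|[|t]] Ht] //; rewrite !ffunE //=; congr (l _); apply: val_inj.
Qed.

Lemma sum_idx1 (F : idx 1 -> C) :
  \sum_(l : idx 1) F l = \sum_(a : 'I_n) F [ffun=> a].
Proof.
rewrite (reindex (fun a : 'I_n => [ffun=> a] : idx 1)) //.
exists (fun l : idx 1 => l ord0) => [a _|l _]; first by rewrite ffunE.
by apply/ffunP => t; rewrite ffunE (ord1 t).
Qed.

Variables (Rm Psi : op 2).

Lemma skew_pt :
  ptr o13 (opmul (@embedN R n 3 Rm 0 1) (embedN Psi 1 2)) = flip ->
  forall x y s : 'I_n,
  \sum_(b : 'I_n) \sum_(c : 'I_n) Rm (pr x b) (pr y c) * Psi (pr c s) (pr b s) =
  ((x == s) && (s == y))%:R.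
Proof.
move=> H x y s; have := congr1 (fun Z => Z (pr x s) (pr y s)) H.
rewrite /flip !ffunE /= => <-.
rewrite /ptr; apply: eq_bigr => b _.
rewrite !ins13.
have -> : @embedN R n 3 Rm 0 1 = embedF fab01 Rm by exact: Rk3_1.
have -> : @embedN R n 3 Psi 1 2 = embedF fab12 Psi by exact: Rk3_2.
rewrite /opmul /embedF.
transitivity (\sum_(k0 : idx 3) (agree fab01 (tr x b s) k0)%:R *
  (Rm (restr fab01 (tr x b s)) (restr fab01 k0) *
   (Psi (restr fab12 k0) (restr fab12 (tr y b s)) * (agree fab12 k0 (tr y b s))%:R))); last first.
  by apply: eq_bigr => k0 _; rewrite !mulrA [_%:R * Rm _ _]mulrC.
rewrite sumS; last exact: fab01_inj.
rewrite sum_idx2.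
have E : forall a c : 'I_n,
  Rm (restr fab01 (tr x b s)) (restr fab01 (mergeF fab01 (tr x b s) (pr a c))) *
  (Psi (restr fab12 (mergeF fab01 (tr x b s) (pr a c))) (restr fab12 (tr y b s)) *
   (agree fab12 (mergeF fab01 (tr x b s) (pr a c)) (tr y b s))%:R) =
  (a == y)%:R * (Rm (pr x b) (pr y c) * Psi (pr c s) (pr b s)).
  move=> a c; rewrite restr_merge; last exact: fab01_inj.
  rewrite merge01_tr !ffunE /= restr01_tr !restr12_tr agree12_tr.
  by case: eqP => [->|_] /=; rewrite ?mulr1 ?mul1r ?mulr0 ?mul0r.
under [RHS]eq_bigr => a _ do under eq_bigr => c _ do rewrite E.
rewrite [RHS](bigD1 y) //= [X in _ + X]big1 ?addr0.
  by apply: eq_bigr => c _; rewrite eqxx mul1r.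
by move=> a /negbTE Ha; apply: big1 => c _; rewrite Ha mul0r.
Qed.

Lemma H2_of_skew :
  ptr o13 (opmul (@embedN R n 3 Rm 0 1) (embedN Psi 1 2)) = flip ->
  forall x y : 'I_n,
  \sum_(l : 'I_n) \sum_(l' : idx 1) DR Psi [ffun=> l] l' * Rm (pr x (l' ord0)) (pr y l) =
  (x == y)%:R.
Proof.
move=> H x y.
have -> : (x == y)%:R = \sum_(s : 'I_n) ((x == s) && (s == y))%:R :> C.
  rewrite (bigD1 x) //= eqxx /= big1 ?addr0 // => s.
  by rewrite eq_sym => /negbTE ->.
under [RHS]eq_bigr => s _ do rewrite -(skew_pt H).
rewrite [RHS]exchange_big /=.
under [RHS]eq_bigr => b _ do rewrite exchange_big /=.
rewrite [RHS]exchange_big /=; apply: eq_bigr => c _.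
rewrite sum_idx1; apply: eq_bigr => b _.
rewrite /DR /ptr big_distrl /=; apply: eq_bigr => s _.
by rewrite !ins01 !ffunE mulrC.
Qed.

End Ops4.


Section Main.
Variable R : realType.
Variable n : nat.
Local Notation C := (R[i]).
Local Notation op := (op R n).
Variable Rm : op 2.
Local Notation EV N w := (@evw R n Rm N w).

Lemma big_foldr N (F : nat -> op N) (s : seq nat) :
  \big[@opmul R n N/op1]_(j <- s) F j = foldr (fun j acc => opmul (F j) acc) op1 s.
Proof. by elim: s => [|x s IH]; rewrite ?big_nil ?big_cons ?IH. Qed.

Lemma foldr_cat N (F : nat -> op N) s1 s2 :
  foldr (fun j acc => opmul (F j) acc) op1 (s1 ++ s2) =
  opmul (foldr (fun j acc => opmul (F j) acc) op1 s1) (foldr (fun j acc => opmul (F j) acc) op1 s2).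
Proof. by elim: s1 => [|x s IH] /=; rewrite ?op1mul // IH opmulA. Qed.

Lemma Ups_evw N k : Ups Rm N k = EV N (ups k).
Proof.
elim: k => [|[|p] IH] //.
have -> : Ups Rm N p.+2 = opmul (\big[@opmul R n N/op1]_(1 <= j < p.+2) Rk Rm N j) (Ups Rm N p.+1) by [].
rewrite IH big_foldr (upsS p.+1) eval_cat; congr opmul.
Qed.

Lemma Jop_evw N k : Jop Rm N k = EV N (jw k).
Proof.
elim: k => [|[|p] IH] //.
have -> : Jop Rm N p.+2 = opmul (Rk Rm N p.+1) (opmul (Jop Rm N p.+1) (Rk Rm N p.+1)) by [].
have -> : jw p.+2 = p.+1 :: jw p.+1 ++ [:: p.+1] by [].
by rewrite IH /= eval_cat /= opmul1.
Qed.

Lemma Jprod_evw N k : Jprod Rm N k = EV N (jpw k).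
Proof.
rewrite /Jprod big_foldr /index_iota subSS subn0.
elim: k => [|k IH] //.
have -> : iota 1 k.+1 = iota 1 k ++ [:: k.+1] by rewrite -(addn1 k) iotaD add1n addn1.
rewrite foldr_cat IH.
have -> : foldr (fun j acc => opmul (Jop Rm N j) acc) op1 [:: k.+1] = Jop Rm N k.+1.
  by rewrite /= opmul1.
by rewrite Jop_evw -eval_cat.
Qed.

Hypothesis braid3 :
  opmul (@embedN R n 3 Rm 0 1) (opmul (@embedN R n 3 Rm 1 2) (@embedN R n 3 Rm 0 1)) =
  opmul (@embedN R n 3 Rm 1 2) (opmul (@embedN R n 3 Rm 0 1) (@embedN R n 3 Rm 1 2)).
Variable D : op 1.
Hypothesis H2 : forall x y : 'I_n,
  \sum_(l : 'I_n) \sum_(l' : idx n 1) D [ffun=> l] l' * Rm (pr x (l' ord0)) (pr y l) = (x == y)%:R.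

Lemma EVbeq N u v : beq u v -> EV N u = EV N v.
Proof. by move=> h; apply: eval_beq. Qed.

Lemma rtr_step' M (X Y : op M) : (0 < M)%N ->
  rtr_last D M (opmul (liftop X) (opmul (Rk Rm M.+1 M) (liftop Y))) = opmul X Y.
Proof. by case: M X Y => [|M] X Y // _; apply: rtr_step. Qed.

Lemma EVcons N x w : EV N (x :: w) = opmul (Rk Rm N x) (EV N w).
Proof. by []. Qed.

Lemma main_step k m p : (p + k <= m)%N -> (0 < m)%N ->
  rtrs D m k (EV (k + m) (Sw (k + m) p)) = EV m (Sw m (p + k)).
Proof.
elim: k p => [|k IH] p pk m0; first by rewrite addn0.
have -> : rtrs D m k.+1 (EV (k.+1 + m) (Sw (k.+1 + m) p)) =
  rtrs D m k (rtr_last D (k + m) (EV (k + m).+1 (Sw (k + m).+1 p))) by [].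
have M0 : (0 < k + m)%N by lia.
have pM : (p.+1 <= k + m)%N by lia.
rewrite (EVbeq _ (StepA M0 pM)) eval_cat EVcons.
rewrite !eval_lift; first last.
- rewrite !all_cat all_Aw // all_ups andbT.
  rewrite andbT; apply: (@all_inrW p); [lia | exact: all_ups].
- exact: all_cp.
rewrite rtr_step' // -eval_cat (EVbeq _ (StepB pM)).
rewrite IH //; [by rewrite addSnnS | lia].
Qed.

Lemma final i : (1 <= i)%N ->
  let U := Ups Rm i i in
  let U4 := opmul U (opmul U (opmul U U)) in
  rtrs D i i (Ups Rm (i + i) (i + i)) = U4 /\
  U4 = opmul (Jprod Rm i i) (Jprod Rm i i).
Proof.
move=> i1 U U4; rewrite /U4 /U; split.
  rewrite Ups_evw.
  have -> : ups (i + i) = Sw (i + i) 0 by rewrite /Sw cats0.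
  rewrite main_step // add0n !Ups_evw -!eval_cat; apply: EVbeq.
  rewrite /Sw; do 2 apply: beq_catl; exact: W4.
rewrite !Jprod_evw !Ups_evw -!eval_cat; apply: EVbeq.
rewrite catA; apply: beq_cat; exact: W5.
Qed.

End Main.

Theorem lemmaB3 (R : realType) (n : nat) (Rm Psi : op R n 2) :
  is_Rmatrix Rm -> skew_inverse Rm Psi ->
  forall i : nat, (1 <= i)%N ->
    let U := Ups Rm i i in
    let U4 := opmul U (opmul U (opmul U U)) in
    rtrs (DR Psi) i i (Ups Rm (i + i) (i + i)) = U4 /\
    U4 = opmul (Jprod Rm i i) (Jprod Rm i i).
Proof.
move=> [_ HB] [HS _] i Hi.
exact: (final HB (H2_of_skew HS) Hi).
Qed.
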